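(* Let $t\ge1$ and $G=\prod_{i=1}^t K_{n_i}$ with all $n_i\ge2$. Then $$\gamma(G)\le 2^t-A(t,2,t-1)\le 3\cdot 2^{t-2}.$$
   Context: Vertices of $\prod_{i=1}^t K_{n_i}$ are tuples $(x_1,\dots,x_t)$ with $x_i\in\{0,\dots,n_i-1\}$, adjacent iff they differ in every coordinate. $\gamma(G)$ is the domination number: the minimum size of a set $D$ such that every vertex is in $D$ or adjacent to a vertex of $D$. $A(t,d,t-1)$ denotes the maximum number of binary vectors of length $t$ such that any two distinct ones have Hamming distance between $d$ and $t-1$ inclusive. *)

(* Defs.v *)
From mathcomp Require Import all_boot.
Set Implicit Arguments. Unset Strict Implicit. Unset Printing Implicit Defensive.

Definition prodK_vertex (t : nat) (n : 'I_t -> nat) : finType :=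
  {dffun forall i : 'I_t, 'I_(n i)}.

Definition prodK_adj (t : nat) (n : 'I_t -> nat) (x y : prodK_vertex n) : bool :=
  [forall i, x i != y i].

Definition prodK_dominating (t : nat) (n : 'I_t -> nat) (D : {set prodK_vertex n}) : bool :=
  [forall v, (v \in D) || [exists u in D, prodK_adj u v]].

(* Domination number: minimum size of a dominating set (the whole vertex set dominates). *)
Definition prodK_gamma (t : nat) (n : 'I_t -> nat) : nat :=
  \big[minn/#|prodK_vertex n|]_(D : {set prodK_vertex n} | prodK_dominating D) #|D|.

Definition hamming (t : nat) (x y : {ffun 'I_t -> bool}) : nat :=
  #|[set i | x i != y i]|.

Definition code_dist_in (t d u : nat) (S : {set {ffun 'I_t -> bool}}) : bool :=
  [forall x in S, forall y in S, (x != y) ==> (d <= hamming x y <= u)].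

Definition A_code (t d u : nat) : nat :=
  \max_(S : {set {ffun 'I_t -> bool}} | code_dist_in d u S) #|S|.

(* Main.v *)
Require Import Defs.
From mathcomp Require Import all_boot.
From mathcomp Require Import zify.
Set Implicit Arguments. Unset Strict Implicit. Unset Printing Implicit Defensive.

Section Aux.

Lemma card_setE (T : finType) (P : pred T) : #|[set i | P i]| = \sum_i P i.
Proof. rewrite -sum1dep_card big_mkcond /=; apply: eq_bigr => i _; by case: (P i). Qed.

Definition wt (t : nat) (x : {ffun 'I_t -> bool}) := #|[set i | x i]|.

Lemma ham_parity t (x y : {ffun 'I_t -> bool}) :
  odd (hamming x y) = odd (wt x) (+) odd (wt y).
Proof.
have E : hamming x y + 2 * \sum_i (x i && y i) = wt x + wt y.
  rewrite /hamming /wt !card_setE big_distrr -!big_split /=.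
  by apply: eq_bigr => i _; case: (x i); case: (y i).
by rewrite -oddD -E oddD oddM /= addbF.
Qed.

Definition flip t (j : 'I_t) (x : {ffun 'I_t -> bool}) : {ffun 'I_t -> bool} :=
  [ffun i => x i (+) (i == j)].

Lemma flipK t (j : 'I_t) : involutive (flip j).
Proof. move=> x; apply/ffunP => i; rewrite !ffunE; by case: (x i); case: (i == j). Qed.

Lemma ham_flip t (j : 'I_t) x : hamming x (flip j x) = 1.
Proof.
rewrite /hamming (_ : [set i | _] = [set j]) ?cards1 //.
apply/setP => i; rewrite !inE ffunE; by case: (x i); case: (i == j).
Qed.

Lemma wt_flip t (j : 'I_t) x : odd (wt (flip j x)) = ~~ odd (wt x).
Proof.
have := ham_parity x (flip j x); rewrite ham_flip /=.
by case: (odd (wt x)); case: (odd (wt (flip j x))).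
Qed.

Lemma lt_bn m (H : 1 < m) (b : bool) : b < m.
Proof. by apply: leq_ltn_trans (leq_b1 b) H. Qed.

Definition emb t (n : 'I_t -> nat) (H : forall i, 1 < n i)
  (b : {ffun 'I_t -> bool}) : prodK_vertex n :=
  @finfun _ (fun i => 'I_(n i)) (fun i => Ordinal (lt_bn (H i) (b i))).

Lemma emb_val t n H b (i : 'I_t) : nat_of_ord (@emb t n H b i) = b i.
Proof. by rewrite /emb ffunE. Qed.

Lemma emb_inj t n H : injective (@emb t n H).
Proof.
move=> b1 b2 E; apply/ffunP => i.
have := emb_val H b1 i; rewrite E emb_val.
by case: (b1 i); case: (b2 i).
Qed.

Lemma gamma_le t (n : 'I_t -> nat) (D : {set prodK_vertex n}) :
  prodK_dominating D -> prodK_gamma n <= #|D|.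
Proof.
move=> HD; rewrite /prodK_gamma.
have : D \in index_enum {set prodK_vertex n} by rewrite mem_index_enum.
elim: (index_enum _) => // S r IH; rewrite inE big_cons.
case/orP => [/eqP <-|Hr]; first by rewrite HD geq_minl.
case: (prodK_dominating S); last exact: IH.
by rewrite geq_min IH ?orbT.
Qed.

End Aux.

Theorem corollary4p6 (t : nat) (n : 'I_t -> nat) :
  1 <= t -> (forall i, 2 <= n i) ->
  prodK_gamma n <= 2 ^ t - A_code t 2 t.-1 /\
  4 * (2 ^ t - A_code t 2 t.-1) <= 3 * 2 ^ t.
Proof.
move=> Ht H.
split.
- have Hne : 0 < #|@code_dist_in t 2 t.-1|.
    apply/card_gt0P; exists set0; rewrite unfold_in.
    by apply/forallP => x; apply/implyP; rewrite inE.
  case: (@eq_bigmax_cond _ (@code_dist_in t 2 t.-1) (fun S => #|S|) Hne).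
  move=> C; rewrite unfold_in => HC HA.
  rewrite /A_code HA.
  set D := [set emb H b | b in ~: C].
  have cardD : #|D| = 2 ^ t - #|C|.
    rewrite card_imset; last exact: emb_inj.
    by have := cardsC C; rewrite card_ffun card_bool card_ord => <-; rewrite addKn.
  rewrite -cardD; apply: gamma_le.
  have codeP : forall x y, x \in C -> y \in C -> x != y ->
      2 <= hamming x y <= t.-1.
    move=> x y Hx Hy Hxy.
    by move/forallP: HC => /(_ x); rewrite Hx /= => /forallP /(_ y); rewrite Hy Hxy.
  apply/forallP => v.
  pose u0 : {ffun 'I_t -> bool} := [ffun i => nat_of_ord (v i) == 0].
  have adj0 : forall u : {ffun 'I_t -> bool}, (forall i, (u i : nat) != v i) ->
      prodK_adj (emb H u) v.
    by move=> u Hu; apply/forallP => i; apply/negP => /eqP E;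
       move: (Hu i); rewrite -E emb_val eqxx.
  case Hu0: (u0 \in C); last first.
    apply/orP; right; apply/existsP; exists (emb H u0).
    rewrite imset_f ?inE ?Hu0 //=; apply: (adj0 u0) => i; rewrite ffunE.
    by case: (nat_of_ord (v i)).
  case Hk: [exists j, 1 < v j].
    case/existsP: Hk => j Hj.
    pose u1 := flip j u0.
    have Hu1 : u1 \notin C.
      apply/negP => Hu1.
      have Hneq : u0 != u1.
        apply/eqP => E; have := ham_flip j u0; rewrite -/u1 -E.
        rewrite /hamming (_ : [set i | _] = set0) ?cards0 //.
        by apply/setP => i; rewrite !inE eqxx.
      have := codeP _ _ Hu0 Hu1 Hneq; by rewrite ham_flip.
    apply/orP; right; apply/existsP; exists (emb H u1).
    rewrite imset_f ?inE ?Hu1 //=; apply: (adj0 u1) => i.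
    rewrite /u1 /flip !ffunE.
    case: (i =P j) => [->|_] /=.
      by move: Hj; case: (nat_of_ord (v j)) => [|[|k]] //; case: (_ == 0).
    by rewrite addbF; case: (nat_of_ord (v i)).
  have Hv : forall i, nat_of_ord (v i) < 2.
    move=> i; rewrite ltnNge; apply/negP => Hi.
    by move/negbT: Hk; rewrite negb_exists => /forallP /(_ i); rewrite Hi.
  pose w : {ffun 'I_t -> bool} := [ffun i => ~~ u0 i].
  have hw : hamming u0 w = t.
    rewrite /hamming (_ : [set i | _] = setT) ?cardsT ?card_ord //.
    by apply/setP => i; rewrite !inE !ffunE; case: (nat_of_ord (v i) == 0).
  have Hw : w \notin C.
    apply/negP => Hw.
    have Hneq : u0 != w.
      apply/eqP => E; move: hw; rewrite -E.
      rewrite /hamming (_ : [set i | _] = set0) ?cards0; first by move=> E0; move: Ht; rewrite -E0.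
      by apply/setP => i; rewrite !inE eqxx.
    have := codeP _ _ Hu0 Hw Hneq; rewrite hw => /andP [_ Hle]; lia.
  apply/orP; left; apply/imsetP; exists w; first by rewrite inE.
  apply/ffunP => i; apply/val_inj; rewrite /= emb_val /w /u0 !ffunE.
  by move: (Hv i); case: (nat_of_ord (v i)) => [|[|k]].
- pose i0 : 'I_t := Ordinal Ht.
  pose S := [set x : {ffun 'I_t -> bool} | ~~ x i0 && ~~ odd (wt x)].
  have HS : @code_dist_in t 2 t.-1 S.
    apply/forallP => x; apply/implyP => Hx; apply/forallP => y; apply/implyP => Hy.
    apply/implyP => Hxy.
    move: Hx Hy; rewrite !inE => /andP [x0 ex] /andP [y0 ey].
    apply/andP; split.
      have hp := ham_parity x y; rewrite (negbTE ex) (negbTE ey) /= in hp.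
      case Eh: (hamming x y) => [|[|h]] //; last by rewrite Eh in hp.
      exfalso; move/eqP: Hxy; apply; apply/ffunP => i.
      move: Eh; rewrite /hamming => /cards0_eq /setP /(_ i); rewrite !inE.
      by move/negbT; rewrite negbK => /eqP.
    rewrite /hamming; apply: (@leq_trans #|[set~ i0]|); last by rewrite cardsC1 card_ord.
    apply: subset_leq_card; apply/subsetP => i; rewrite !inE.
    apply: contra => /eqP ->; by rewrite (negbTE x0) (negbTE y0).
  have HleS : #|S| <= A_code t 2 t.-1 :=
    @leq_bigmax_cond _ (@code_dist_in t 2 t.-1) (fun S => #|S|) S HS.
  suff : 2 ^ t <= 4 * #|S| by lia.
  case: (ltnP 1 t) => Ht2.
    pose i1 : 'I_t := Ordinal Ht2.
    have leqU : forall (T : finType) (A B : {set T}), #|A :|: B| <= #|A| + #|B|.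
      by move=> T A B; rewrite cardsU leq_subr.
    have Hcov : [set: {ffun 'I_t -> bool}] \subset
      ((S :|: flip i1 @: S) :|: flip i0 @: S) :|: (fun x => flip i1 (flip i0 x)) @: S.
      apply/subsetP => x _.
      have f10 : forall y : {ffun 'I_t -> bool}, flip i1 y i0 = y i0.
        by move=> y; rewrite ffunE (_ : (i0 == i1) = false) ?addbF.
      have f00 : forall y : {ffun 'I_t -> bool}, flip i0 y i0 = ~~ y i0.
        by move=> y; rewrite ffunE eqxx addbT.
      case Ea: (x i0); case Ep: (odd (wt x)).
      - apply/setUP; left; apply/setUP; right; rewrite -[x](flipK i0).
        by apply: imset_f; rewrite inE f00 Ea wt_flip Ep.
      - apply/setUP; right.
        have -> : x = flip i1 (flip i0 (flip i0 (flip i1 x))) by rewrite !flipK.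
        apply: (imset_f (fun y => flip i1 (flip i0 y))).
        by rewrite inE f00 f10 Ea !wt_flip Ep.
      - apply/setUP; left; apply/setUP; left; apply/setUP; right.
        rewrite -[x](flipK i1); apply: imset_f; by rewrite inE f10 Ea wt_flip Ep.
      - by apply/setUP; left; apply/setUP; left; apply/setUP; left; rewrite inE Ea Ep.
    have := subset_leq_card Hcov; rewrite cardsT card_ffun card_bool card_ord => Hc.
    apply: (leq_trans Hc); apply: (leq_trans (leqU _ _ _)).
    have e : 4 * #|S| = ((#|S| + #|S|) + #|S|) + #|S| by lia.
    rewrite e; apply: leq_add; last exact: leq_imset_card.
    apply: leq_trans (leqU _ _ _) _; apply: leq_add; last exact: leq_imset_card.
    apply: leq_trans (leqU _ _ _) _; apply: leq_add => //; exact: leq_imset_card.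
  have -> : 2 ^ t = 2 by have -> : t = 1 by lia.
  have : [ffun=> false] \in S.
    rewrite inE ffunE /= /wt (_ : [set i | _] = set0) ?cards0 //.
    by apply/setP => i; rewrite !inE ffunE.
  move=> HS0; have : 0 < #|S| by apply/card_gt0P; exists [ffun=> false].
  lia.
Qed.
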